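(* Let $F$ be a Henselian discretely valued field with residue field $\kappa$ and completion $\hat{F}$. Let $L_1,\dots,L_m$ be finite separable field extensions of $F$ with $[L_i:F]=n_i$, where $\mathrm{char}(\kappa)$ does not divide $n_i$ and $F$ contains a primitive $n_i^2$-th root of unity, for all $1\le i\le m$. Let $L=\prod_{i=1}^m L_i$. Then the natural map $T_{L/F}(F)\to T_{L/F}(\hat{F})/R$ is surjective.
   Context: The multinorm torus $T_{L/F}$ is the kernel of $\prod_{i} R_{L_i/F}\mathbb{G}_m\to\mathbb{G}_m$, $(x_i)\mapsto\prod_i N_{L_i/F}(x_i)$. For a torus $T$ over $F$ and a field extension $M/F$, $T(M)/R$ is the quotient of $T(M)$ by the subgroup of elements $R$-equivalent to the identity, $R$-equivalence being generated by: $x_0\sim x_1$ if some $M$-rational map $f:\mathbb{P}^1\dashrightarrow T$ satisfies $f(0)=x_0$, $f(1)=x_1$. *)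

(* Defs.v *)
From HB Require Import structures.
From mathcomp Require Import all_boot all_order all_algebra all_field.
From Stdlib Require Import Relations.
Set Implicit Arguments. Unset Strict Implicit. Unset Printing Implicit Defensive.
Import Order.TTheory GRing.Theory Num.Theory.
Local Open Scope ring_scope.

(* v x is only meaningful for x != 0 (v 0 = +oo by convention). *)
Definition is_dvaluation (K : fieldType) (v : K -> int) : Prop :=
  [/\ forall x y : K, x != 0 -> y != 0 -> v (x * y) = v x + v y,
      forall x y : K, x != 0 -> y != 0 -> x + y != 0 ->
        Num.min (v x) (v y) <= v (x + y)
    & exists pi : K, pi != 0 /\ v pi = 1].

Definition vint (K : fieldType) (v : K -> int) (x : K) : bool :=
  (x == 0) || (0 <= v x).
Definition vmax (K : fieldType) (v : K -> int) (x : K) : bool :=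
  (x == 0) || (0 < v x).
Definition vge (K : fieldType) (v : K -> int) (N : int) (x : K) : bool :=
  (x == 0) || (N <= v x).

Definition henselian (K : fieldType) (v : K -> int) : Prop :=
  forall (p : {poly K}) (a : K),
    p \is monic -> (forall i, vint v p`_i) -> vint v a ->
    vmax v p.[a] -> ~~ vmax v (p^`()).[a] ->
    exists b : K, root p b /\ vmax v (b - a).

(* char of the residue field does not divide n  <=>  n is a unit in O_v *)
Definition resid_char_ndiv (K : fieldType) (v : K -> int) (n : nat) : Prop :=
  (n%:R : K) != 0 /\ v (n%:R) = 0.

Definition is_completion (F Fh : fieldType) (v : F -> int)
    (iota : {rmorphism F -> Fh}) (vh : Fh -> int) : Prop :=
  [/\ is_dvaluation vh,
      forall x : F, x != 0 -> vh (iota x) = v x,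
      forall s : nat -> Fh,
        (forall N : int, exists k, forall i j, (k <= i)%N -> (k <= j)%N ->
            vge vh N (s i - s j)) ->
        exists l : Fh, forall N : int, exists k, forall i, (k <= i)%N ->
            vge vh N (s i - l)
    &
      forall (x : Fh) (N : int), exists y : F, vge vh N (iota y - x)].

Section Torus.
Variable F : fieldType.

Definition mulcoef (L : fieldExtType F) (k i j : 'I_(\dim {:L})) : F :=
  coord (vbasis {:L}) j (tnth (vbasis {:L}) k * tnth (vbasis {:L}) i).

(* For an F-algebra A (structure map phi) and x in L (x)_F A given by its
   coordinates x : 'rV[A]_n, the norm N_{L(x)A / A}(x) = det(mult. by x). *)
Definition normA (A : comRingType) (phi : F -> A) (L : fieldExtType F)
    (x : 'rV[A]_(\dim {:L})) : A :=
  \det (\matrix_(i, j) \sum_k x 0 k * phi (mulcoef k i j)).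

(* A-points of T_{L/F}, L = prod_i L_i : tuples with prod of norms = 1
   (this forces each coordinate to be a unit of L_i (x) A). *)
Definition pts (m : nat) (L : 'I_m -> fieldExtType F) (A : Type) : Type :=
  forall i : 'I_m, 'rV[A]_(\dim {:L i}).

Definition inT (m : nat) (L : 'I_m -> fieldExtType F) (A : comRingType)
    (phi : F -> A) (x : pts L A) : Prop :=
  \prod_(i < m) normA phi (x i) = 1.

(* Elementary R-link over a field M (an F-algebra via iota): there is an
   M-rational map f : P^1 --> T defined at 0 and 1 with f(0)=x0, f(1)=x1.
   Such f is a point of T(O), O = local ring of M[t] at {0,1}; we write its
   coordinates with a common denominator q (q(0), q(1) <> 0), numerators P;
   the condition prod_i N(P_i/q) = 1 reads prod_i N(P_i) = q^(sum_i n_i). *)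
Definition Rlink (m : nat) (L : 'I_m -> fieldExtType F) (M : fieldType)
    (iota : {rmorphism F -> M}) (x0 x1 : pts L M) : Prop :=
  exists (q : {poly M}) (P : pts L {poly M}),
    [/\ q.[0] != 0, q.[1] != 0,
        \prod_(i < m) normA (fun a => (iota a)%:P) (P i)
          = q ^+ (\sum_(i < m) \dim {:L i}),
        forall i k, (P i 0 k).[0] / q.[0] = x0 i 0 k
      & forall i k, (P i 0 k).[1] / q.[1] = x1 i 0 k].

Definition Requiv (m : nat) (L : 'I_m -> fieldExtType F) (M : fieldType)
    (iota : {rmorphism F -> M}) : relation (pts L M) :=
  clos_refl_sym_trans _ (Rlink iota).

End Torus.

(* Main.v *)
Require Import Defs.
From HB Require Import structures.
From mathcomp Require Import all_boot all_order all_algebra all_field.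
From Stdlib Require Import Relations.
From mathcomp Require Import zify ring lra.
Import Order.TTheory GRing.Theory Num.Theory.
Local Open Scope ring_scope.

Set Implicit Arguments. Unset Strict Implicit. Unset Printing Implicit Defensive.

Section AlgF.
Variables (F : fieldType) (L : fieldExtType F).
Local Notation d := (\dim {:L}).
Local Notation bb k := (tnth (vbasis {:L}) k).

Definition Cm (k : 'I_d) : 'M[F]_d := \matrix_(i, j) mulcoef k i j.
Definition eF : 'rV[F]_d := \row_j coord (vbasis {:L}) j 1.

Lemma coord_expand (x y : L) q :
  coord (vbasis {:L}) q (x * y) =
  \sum_l coord (vbasis {:L}) l y * coord (vbasis {:L}) q (x * bb l).
Proof.
rewrite {1}(coord_vbasis (memvf y)) mulr_sumr linear_sum; apply: eq_bigr => l _.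
by rewrite -scalerAr linearZ /= (tnth_nth 0).
Qed.

Lemma mulcoefC k i j : mulcoef (L:=L) k i j = mulcoef i k j.
Proof. by rewrite /mulcoef mulrC. Qed.

Lemma CmM i k : Cm i *m Cm k = \sum_j mulcoef k i j *: Cm j.
Proof.
apply/matrixP => p q; rewrite !mxE summxE.
transitivity (\sum_j coord (vbasis {:L}) j (bb i * bb p) * coord (vbasis {:L}) q (bb k * bb j)).
  by apply: eq_bigr => j _; rewrite !mxE.
transitivity (\sum_j coord (vbasis {:L}) j (bb k * bb i) * coord (vbasis {:L}) q (bb p * bb j)); last first.
  by apply: eq_bigr => j _; rewrite !mxE /mulcoef (mulrC (bb j)).
rewrite -!coord_expand; congr (coord _ _ _).
by rewrite mulrA [bb k * _]mulrC -mulrA [bb p * _]mulrC mulrA.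
Qed.

Lemma Cm1 : \sum_k eF 0 k *: Cm k = 1%:M.
Proof.
apply/matrixP => p q; rewrite summxE !mxE.
transitivity (\sum_j coord (vbasis {:L}) j 1 * coord (vbasis {:L}) q (bb p * bb j)).
  by apply: eq_bigr => j _; rewrite !mxE /mulcoef (mulrC (bb j)).
rewrite -coord_expand mulr1 (tnth_nth 0) coord_free //.
exact: basis_free (vbasisP _).
Qed.

End AlgF.

Section AlgA.
Variables (F : fieldType) (L : fieldExtType F).
Variables (A : comNzRingType) (phi : {rmorphism F -> A}).
Local Notation d := (\dim {:L}).

Definition CA (k : 'I_d) : 'M[A]_d := map_mx phi (Cm k).
Definition Mat (a : 'rV[A]_d) : 'M[A]_d := \sum_k a 0 k *: CA k.
Definition eA : 'rV[A]_d := map_mx phi (eF L).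

Lemma normAE a : normA phi a = \det (Mat a).
Proof.
congr (\det _); apply/matrixP => i j; rewrite !mxE summxE.
by apply: eq_bigr => k _; rewrite !mxE.
Qed.

Lemma CAM i k : CA i *m CA k = \sum_j phi (mulcoef k i j) *: CA j.
Proof.
rewrite /CA -map_mxM CmM; apply/matrixP => p q; rewrite !mxE !summxE rmorph_sum.
by apply: eq_bigr => j _; rewrite !mxE rmorphM.
Qed.

Lemma MatD : {morph Mat : a b / a + b}.
Proof.
move=> a b; rewrite /Mat -big_split; apply: eq_bigr => k _.
by rewrite mxE scalerDl.
Qed.

Lemma MatZ c a : Mat (c *: a) = c *: Mat a.
Proof.
rewrite /Mat scaler_sumr; apply: eq_bigr => k _.
by rewrite mxE scalerA.
Qed.

Lemma Mat1 : Mat eA = 1%:M.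
Proof.
apply/matrixP => p q; rewrite /Mat summxE.
transitivity (phi ((1%:M : 'M[F]_d) p q)); last by rewrite !mxE rmorph_nat.
rewrite -(Cm1 L) summxE rmorph_sum; apply: eq_bigr => k _; by rewrite !mxE rmorphM.
Qed.

Lemma MatM a b : Mat (a *m Mat b) = Mat a *m Mat b.
Proof.
rewrite /Mat mulmx_suml.
transitivity (\sum_i \sum_k (a 0 i * b 0 k) *: (CA i *m CA k)); last first.
  apply: eq_bigr => i _; rewrite -scalemxAl mulmx_sumr scaler_sumr.
  by apply: eq_bigr => k _; rewrite -scalemxAr scalerA.
under [RHS]eq_bigr do under eq_bigr do rewrite CAM scaler_sumr.
under [RHS]eq_bigr do rewrite exchange_big /=.
rewrite exchange_big /=; apply: eq_bigr => j _.
rewrite mxE scaler_suml; apply: eq_bigr => i _.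
rewrite summxE mulr_sumr scaler_suml; apply: eq_bigr => k _.
by rewrite !mxE scalerA mulrA [a 0 i * b 0 k]mulrC.
Qed.

Definition tmul (a b : 'rV[A]_d) := a *m Mat b.

Lemma tmulC : commutative tmul.
Proof.
move=> a b; apply/rowP => j; rewrite /tmul /Mat !mxE.
under eq_bigr do rewrite summxE mulr_sumr.
under [RHS]eq_bigr do rewrite summxE mulr_sumr.
rewrite exchange_big /=; apply: eq_bigr => i _; apply: eq_bigr => k _.
by rewrite !mxE mulcoefC mulrCA.
Qed.

Lemma tmulA : associative tmul.
Proof. by move=> a b c; rewrite /tmul MatM mulmxA. Qed.

Lemma tmul1 : left_id eA tmul.
Proof. by move=> a; rewrite tmulC /tmul Mat1 mulmx1. Qed.

Lemma tmulDl : left_distributive tmul +%R.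
Proof. by move=> a b c; rewrite /tmul mulmxDl. Qed.

Definition tens : Type := let _ := phi in 'rV[A]_d.
HB.instance Definition _ := GRing.Lmodule.on tens.
HB.instance Definition _ := GRing.Zmodule_isComPzRing.Build tens tmulA tmulC tmul1 tmulDl.

End AlgA.

Section AlgA2.
Variables (F : fieldType) (L : fieldExtType F).
Variables (A : comNzRingType) (phi : {rmorphism F -> A}).
Local Notation d := (\dim {:L}).
Local Notation T := (tens L phi).

Definition nrm (a : T) : A := \det (Mat phi a).

Lemma tmulE (a b : T) : a * b = a *m Mat phi b. Proof. by []. Qed.
Lemma tone : (1 : T) = eA L phi. Proof. by []. Qed.

Lemma MatMT (a b : T) : Mat phi (a * b) = Mat phi a *m Mat phi b.
Proof. exact: MatM. Qed.

Lemma nrmM (a b : T) : nrm (a * b) = nrm a * nrm b.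
Proof. by rewrite /nrm MatMT det_mulmx. Qed.

Lemma nrm1 : nrm 1 = 1.
Proof. by rewrite /nrm tone Mat1 det1. Qed.

Lemma nrmX (a : T) k : nrm (a ^+ k) = nrm a ^+ k.
Proof.
elim: k => [|k IH]; first by rewrite !expr0 nrm1.
by rewrite !exprS nrmM IH.
Qed.

Lemma nrmZ c (a : T) : nrm (c *: a) = c ^+ d * nrm a.
Proof. by rewrite /nrm MatZ detZ. Qed.

Lemma tscaleAl c (a b : T) : (c *: a) * b = c *: (a * b).
Proof. by rewrite !tmulE scalemxAl. Qed.

Lemma tscaleAr c (a b : T) : a * (c *: b) = c *: (a * b).
Proof. by rewrite mulrC tscaleAl mulrC. Qed.

Lemma normA_nrm (a : T) : normA phi a = nrm a.
Proof. exact: normAE. Qed.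

End AlgA2.

Lemma normA_ext (F : fieldType) (L : fieldExtType F) (A : comNzRingType)
  (phi1 phi2 : F -> A) (a : 'rV[A]_(\dim {:L})) :
  (forall x, phi1 x = phi2 x) -> normA phi1 a = normA phi2 a.
Proof.
move=> e; rewrite /normA; congr (\det _); apply/matrixP => i j; rewrite !mxE.
by apply: eq_bigr => k _; rewrite e.
Qed.

Section MapA.
Variables (F : fieldType) (L : fieldExtType F).
Variables (A B : comNzRingType) (phiA : {rmorphism F -> A}) (phiB : {rmorphism F -> B}).
Variable f : {rmorphism A -> B}.
Hypothesis hf : forall x, f (phiA x) = phiB x.
Local Notation d := (\dim {:L}).

Definition tmap (a : tens L phiA) : tens L phiB := map_mx f a.

Lemma Mat_map (a : tens L phiA) : map_mx f (Mat phiA a) = Mat phiB (tmap a).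
Proof.
apply/matrixP => i j; rewrite mxE /Mat !summxE rmorph_sum; apply: eq_bigr => k _.
by rewrite !mxE rmorphM hf.
Qed.

Lemma tmapM (a b : tens L phiA) : tmap (a * b) = tmap a * tmap b.
Proof. by rewrite /tmap !tmulE map_mxM Mat_map. Qed.

Lemma tmap1 : tmap 1 = 1.
Proof. by apply/rowP => j; rewrite !mxE hf. Qed.

Lemma tmapX (a : tens L phiA) k : tmap (a ^+ k) = tmap a ^+ k.
Proof. elim: k => [|k IH]; first by rewrite !expr0 tmap1. by rewrite !exprS tmapM IH. Qed.

Lemma tmapD (a b : tens L phiA) : tmap (a + b) = tmap a + tmap b.
Proof. by rewrite /tmap map_mxD. Qed.

Lemma tmapZ c (a : tens L phiA) : tmap (c *: a) = f c *: tmap a.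
Proof. by apply/rowP => j; rewrite !mxE rmorphM. Qed.

Lemma nrm_map (a : tens L phiA) : f (nrm a) = nrm (tmap a).
Proof. by rewrite /nrm -det_map_mx Mat_map. Qed.

End MapA.

Section InvA.
Variables (F : fieldType) (L : fieldExtType F).
Variables (A : fieldType) (phi : {rmorphism F -> A}).

Definition tinv (a : tens L phi) : tens L phi := (1 : tens L phi) *m invmx (Mat phi a).

Lemma tinvK (a : tens L phi) : nrm a != 0 -> a * tinv a = 1.
Proof.
move=> h; rewrite mulrC tmulE /tinv -mulmxA mulVmx ?mulmx1 //.
by rewrite unitmxE unitfE.
Qed.
End InvA.

Section Val.
Variables (K : fieldType) (w : K -> int).
Hypothesis hw : is_dvaluation w.

Lemma wM x y : x != 0 -> y != 0 -> w (x * y) = w x + w y.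
Proof. by destruct hw as [h _ _]; apply: h. Qed.

Lemma wmin x y : x != 0 -> y != 0 -> x + y != 0 -> Num.min (w x) (w y) <= w (x + y).
Proof. by destruct hw as [_ h _]; apply: h. Qed.

Lemma w1 : w 1 = 0.
Proof.
have h : w 1 = w 1 + w 1 by rewrite -wM ?oner_neq0 // mulr1.
lia.
Qed.

Lemma wN1 : w (-1) = 0.
Proof.
have h : (-1 : K) != 0 by rewrite oppr_eq0 oner_neq0.
have h2 : w 1 = w (-1) + w (-1) by rewrite -wM // mulrNN mulr1.
rewrite w1 in h2; lia.
Qed.

Lemma wN x : w (- x) = w x.
Proof.
have [->|x0] := eqVneq x 0; first by rewrite oppr0.
have h : (-1 : K) != 0 by rewrite oppr_eq0 oner_neq0.
by rewrite -mulN1r wM // wN1 add0r.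
Qed.

Lemma vge0 N : vge w N 0. Proof. by rewrite /vge eqxx. Qed.

Lemma vgeD N x y : vge w N x -> vge w N y -> vge w N (x + y).
Proof.
rewrite /vge; have [->|x0] := eqVneq x 0; first by rewrite add0r.
have [->|y0] := eqVneq y 0; first by rewrite addr0 (negPf x0) => ? _.
have [->//|s0] := eqVneq (x + y) 0; rewrite /= => hx hy.
apply: le_trans (wmin x0 y0 s0).
by rewrite le_min hx hy.
Qed.

Lemma vgeN N x : vge w N x -> vge w N (- x).
Proof. by rewrite /vge oppr_eq0 wN. Qed.

Lemma vgeB N x y : vge w N x -> vge w N y -> vge w N (x - y).
Proof. by move=> hx hy; apply: vgeD => //; apply: vgeN. Qed.

Lemma vgeM N M x y : vge w N x -> vge w M y -> vge w (N + M) (x * y).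
Proof.
rewrite /vge; have [->|x0] := eqVneq x 0; first by rewrite mul0r eqxx.
have [->|y0] := eqVneq y 0; first by rewrite mulr0 eqxx.
by rewrite mulf_eq0 (negPf x0) (negPf y0) /= wM // => hx hy; apply: lerD.
Qed.

Lemma vge_le N N' x : N' <= N -> vge w N x -> vge w N' x.
Proof. by move=> h; rewrite /vge => /orP[->//|h2]; rewrite (le_trans h h2) orbT. Qed.

Lemma vge_sum N (I : Type) (r : seq I) (P : pred I) (f : I -> K) :
  (forall i, P i -> vge w N (f i)) -> vge w N (\sum_(i <- r | P i) f i).
Proof.
move=> h; elim/big_rec: _ => [|i x Pi hx]; first exact: vge0.
by apply: vgeD => //; apply: h.
Qed.

Lemma vge_all x : (forall N, vge w N x) -> x = 0.
Proof.
move=> h; apply/eqP; have := h (w x + 1); rewrite /vge => /orP[//| h2].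
exfalso; lia.
Qed.

Lemma vge1 : vge w 0 1.
Proof. by rewrite /vge w1 lexx orbT. Qed.

Lemma vge_nat n : vge w 0 n%:R.
Proof.
elim: n => [|n IH]; first exact: vge0.
by rewrite -addn1 natrD; apply: vgeD => //; apply: vge1.
Qed.

Lemma vge_sign n : vge w 0 ((-1) ^+ n).
Proof.
elim: n => [|n IH]; first by rewrite expr0 vge1.
by rewrite exprS -(add0r 0); apply: vgeM => //; apply: vgeN; apply: vge1.
Qed.

Lemma vgeV x : x != 0 -> w x = 0 -> vge w 0 x^-1.
Proof.
move=> x0 wx; rewrite /vge invr_eq0 (negPf x0) /=.
have := wM x0 (invr_neq0 x0); rewrite mulfV // w1 wx add0r => <-.
by [].
Qed.

Lemma vge_bound (I : finType) (f : I -> K) :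
  exists C : int, 0 <= C /\ forall i, vge w (- C) (f i).
Proof.
exists (\sum_i `|w (f i)|); split; first by apply: sumr_ge0 => i _.
move=> i; rewrite /vge; apply/orP; right.
rewrite lerNl (bigD1 i) //=.
have h1 : - w (f i) <= `|w (f i)| by rewrite -normrN ler_norm.
apply: le_trans h1 _; rewrite lerDl; exact: sumr_ge0.
Qed.

Lemma vge_prodB N (I : Type) (r : seq I) (a b : I -> K) :
  (forall i, vge w 0 (a i)) -> (forall i, vge w 0 (b i)) ->
  (forall i, vge w N (a i - b i)) ->
  vge w N (\prod_(i <- r) a i - \prod_(i <- r) b i).
Proof.
move=> ha hb hab; elim: r => [|i r IH]; first by rewrite !big_nil subrr vge0.
rewrite !big_cons.
have -> : a i * \prod_(j <- r) a j - b i * \prod_(j <- r) b j =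
  (a i - b i) * \prod_(j <- r) a j + b i * (\prod_(j <- r) a j - \prod_(j <- r) b j).
  by rewrite mulrBl mulrBr addrA subrK.
apply: vgeD.
  rewrite -[N]addr0; apply: vgeM => //.
  by elim/big_rec: _ => [|j x _ hx]; [exact: vge1|rewrite -(add0r 0); apply: vgeM].
by rewrite -[N]add0r; apply: vgeM.
Qed.

Lemma vge_detB N n (M1 M2 : 'M[K]_n) :
  (forall i j, vge w 0 (M1 i j)) -> (forall i j, vge w 0 (M2 i j)) ->
  (forall i j, vge w N (M1 i j - M2 i j)) -> vge w N (\det M1 - \det M2).
Proof.
move=> h1 h2 h12; rewrite /determinant -sumrB; apply: vge_sum => s _.
rewrite -mulrBr -[N]add0r; apply: vgeM; first exact: vge_sign.
by apply: vge_prodB.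
Qed.

End Val.

Section Root.
Variables (F : fieldType) (L : fieldExtType F).
Variables (Fh : fieldType) (iota : {rmorphism F -> Fh}) (vh : Fh -> int).
Hypothesis hvh : is_dvaluation vh.
Variable C0 : int.
Hypothesis hC0 : 0 <= C0.
Hypothesis hC : forall k i j, vge vh (- C0) (iota (mulcoef (L:=L) k i j)).
Local Notation d := (\dim {:L}).
Local Notation T := (tens L iota).

Definition vecge N (a : 'rV[Fh]_d) := forall j, vge vh N (a 0 j).

Lemma vecge0 N : vecge N 0.
Proof. by move=> j; rewrite mxE; apply: vge0. Qed.

Lemma vecgeD N a b : vecge N a -> vecge N b -> vecge N (a + b).
Proof. by move=> ha hb j; rewrite mxE; apply: (vgeD hvh). Qed.

Lemma vecgeN N a : vecge N a -> vecge N (- a).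
Proof. by move=> ha j; rewrite mxE; apply: (vgeN hvh). Qed.

Lemma vecgeB N a b : vecge N a -> vecge N b -> vecge N (a - b).
Proof. by move=> ha hb; apply: vecgeD => //; apply: vecgeN. Qed.

Lemma vecge_le N N' a : N' <= N -> vecge N a -> vecge N' a.
Proof. by move=> h ha j; apply: vge_le (ha j). Qed.

Lemma vecgeZ M N c a : vge vh M c -> vecge N a -> vecge (M + N) (c *: a).
Proof. by move=> hc ha j; rewrite mxE; apply: (vgeM hvh). Qed.

Lemma vecge_sum N (I : Type) (r : seq I) (P : pred I) (f : I -> 'rV[Fh]_d) :
  (forall i, P i -> vecge N (f i)) -> vecge N (\sum_(i <- r | P i) f i).
Proof.
move=> h; elim/big_rec: _ => [|i x Pi hx]; first exact: vecge0.
by apply: vecgeD => //; apply: h.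
Qed.

Lemma Mat_entry N (b : T) i j : vecge N b -> vge vh (N - C0) (Mat iota b i j).
Proof.
move=> hb; rewrite /Mat summxE; apply: (vge_sum hvh) => k _.
rewrite !mxE; apply: (vgeM hvh) => //.
Qed.

Lemma vecgeM N M (a b : T) : vecge N a -> vecge M b -> vecge (N + M - C0) (a * b).
Proof.
move=> ha hb j; rewrite tmulE mxE; apply: (vge_sum hvh) => i _.
rewrite -addrA; apply: (vgeM hvh) => //; exact: Mat_entry.
Qed.

Definition Dn N (a : T) := vecge (N + C0) a.

Lemma DnM N M (a b : T) : Dn N a -> Dn M b -> Dn (N + M) (a * b).
Proof.
move=> ha hb; have := vecgeM ha hb; apply: vecge_le; lia.
Qed.

Lemma Dn_le N N' a : N' <= N -> Dn N a -> Dn N' a.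
Proof. by move=> h; apply: vecge_le; lia. Qed.

Lemma DnZ N c (a : T) : vge vh 0 c -> Dn N a -> Dn N (c *: a).
Proof. by move=> hc ha; have := vecgeZ hc ha; rewrite add0r. Qed.

Lemma Dn_pow M (e : T) k : 0 <= M -> Dn M e -> Dn M ((1 + e) ^+ k - 1).
Proof.
move=> hM he; elim: k => [|k IH]; first by rewrite expr0 subrr; apply: vecge0.
have -> : (1 + e) ^+ k.+1 - 1 = ((1 + e) ^+ k - 1) + ((1 + e) ^+ k - 1) * e + e.
  by rewrite exprS; ring.
apply: vecgeD => //; apply: vecgeD => //.
by apply: (Dn_le (N := M + M)); [lia | apply: DnM].
Qed.

Lemma Mat_one_add (e : T) : Mat iota (1 + e) = 1%:M + Mat iota e.
Proof. by rewrite MatD tone Mat1. Qed.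

Lemma nrm_close N (e : T) : 0 <= N -> Dn N e -> vge vh N (nrm (1 + e) - 1).
Proof.
move=> hN he; rewrite /nrm -(det1 Fh d) Mat_one_add.
have hE : forall i j, vge vh N (Mat iota e i j).
  move=> i j; have := Mat_entry i j he; apply: vge_le; lia.
apply: (vge_detB hvh) => // i j; rewrite ?mxE.
- apply: (vgeD hvh); first by case: (i == j); [apply: (vge1 hvh)|apply: vge0].
  by apply: vge_le (hE i j).
- by case: (i == j); [apply: (vge1 hvh)|apply: vge0].
- by rewrite addrC addrK.
Qed.


Hypothesis hcomp : forall s : nat -> Fh,
        (forall N : int, exists k, forall i j, (k <= i)%N -> (k <= j)%N ->
            vge vh N (s i - s j)) ->
        exists l : Fh, forall N : int, exists k, forall i, (k <= i)%N ->
            vge vh N (s i - l).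

Section RootEx.
Variable n : nat.
Hypothesis hn0 : (n%:R : Fh) != 0.
Hypothesis hn : vh n%:R = 0.
Variable N : int.
Hypothesis hN : 1 <= N.
Variable z : T.
Hypothesis hz : Dn N (z - 1).

Let ninv : Fh := (n%:R)^-1.
Let cn : T := ninv *: (1 : T).

Lemma ninv_int : vge vh 0 ninv.
Proof. exact: (vgeV hvh). Qed.

Lemma cnE (u : T) : cn * u = ninv *: u.
Proof. by rewrite /cn tscaleAl mul1r. Qed.

Lemma cn_n : cn * n%:R = 1.
Proof.
rewrite cnE -scaler_nat scalerA mulVf // scale1r //.
Qed.

Definition Tf (e : T) : T := e + cn * (z - (1 + e) ^+ n).

Lemma Tf_contr K e e' : Dn N e -> Dn N e' -> Dn K (e - e') -> Dn (K + N) (Tf e - Tf e').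
Proof.
move=> he he' hK.
set S := \sum_(i < n) (1 + e) ^+ (n.-1 - i) * (1 + e') ^+ i.
have hXY : (1 + e) ^+ n - (1 + e') ^+ n = (e - e') * S.
  by rewrite subrXX; congr (_ * _); ring.
have -> : Tf e - Tf e' = (e - e') * (1 - cn * S).
  transitivity ((e - e') - cn * ((1 + e) ^+ n - (1 + e') ^+ n)); first by rewrite /Tf; ring.
  by rewrite hXY; ring.
apply: DnM => //.
have -> : 1 - cn * S = - (cn * (S - n%:R)).
  transitivity (cn * n%:R - cn * S); first by rewrite cn_n.
  by ring.
apply: vecgeN; rewrite cnE; apply: DnZ; first exact: ninv_int.
have -> : (n%:R : T) = \sum_(i < n) 1 by rewrite sumr_const card_ord.
rewrite /S -sumrB; apply: vecge_sum => i _.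
set X := (1 + e) ^+ _; set Y := (1 + e') ^+ _.
have hX : Dn N (X - 1) by apply: Dn_pow => //; lia.
have hY : Dn N (Y - 1) by apply: Dn_pow => //; lia.
have -> : X * Y - 1 = (X - 1) * (Y - 1) + (X - 1) + (Y - 1) by ring.
apply: vecgeD => //; apply: vecgeD => //.
by apply: (Dn_le (N := N + N)); [lia | apply: DnM].
Qed.

Definition sq k := iter k Tf 0.

Lemma Tf0 : Dn N (Tf 0).
Proof.
rewrite /Tf add0r addr0 expr1n cnE; apply: DnZ => //; exact: ninv_int.
Qed.

Lemma sq_prop k : Dn N (sq k) /\ Dn (N * (k.+1)%:R) (sq k.+1 - sq k).
Proof.
elim: k => [|k [h1 h2]].
  split; first exact: vecge0.
  by rewrite /sq /= subr0 mulr1; apply: Tf0.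
have h1' : Dn N (sq k.+1).
  have -> : sq k.+1 = sq k + (sq k.+1 - sq k) by rewrite addrC subrK.
  apply: vecgeD => //; apply: Dn_le h2; rewrite -[X in X <= _]mulr1 ler_wpM2l //; first lia.
  by rewrite ler1n.
split => //.
have := Tf_contr h1' h1 h2; apply: Dn_le.
have -> : ((k.+2)%:R : int) = (k.+1)%:R + 1 by rewrite -natr1.
by rewrite mulrDr mulr1.
Qed.

Lemma sq_tel j i : (j <= i)%N -> Dn (N * (j.+1)%:R) (sq i - sq j).
Proof.
move=> hji; elim: i hji => [|i IH]; first by rewrite leqn0 => /eqP->; rewrite subrr; apply: vecge0.
rewrite leq_eqVlt => /orP[/eqP->|hji]; first by rewrite subrr; apply: vecge0.
have -> : sq i.+1 - sq j = (sq i.+1 - sq i) + (sq i - sq j) by rewrite addrA subrK.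
apply: vecgeD; last exact: IH.
have [_ h] := sq_prop i; apply: Dn_le h.
by rewrite ler_wpM2l ?ler_nat //; lia.
Qed.

Definition k0 (P : int) : nat := `|P|%N.

Lemma k0_prop P j : (k0 P <= j)%N -> P <= N * (j.+1)%:R + C0.
Proof.
rewrite /k0 => hj; nia.
Qed.

Lemma sq_cauchy P i i' : (k0 P <= i)%N -> (k0 P <= i')%N -> vecge P (sq i - sq i').
Proof.
wlog hii : i i' / (i' <= i)%N.
  move=> hw hi hi'; have [h|h] := leqP i' i; first exact: hw.
  rewrite -opprB; apply: vecgeN; apply: hw => //; exact: ltnW.
move=> _ hi'; have := sq_tel hii; apply: vecge_le; exact: k0_prop.
Qed.

Lemma root_ex : exists e : T, Dn N e /\ (1 + e) ^+ n = z.
Proof.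
have hl : forall j : 'I_d, exists l : Fh, forall P : int, exists k, forall i, (k <= i)%N ->
            vge vh P (sq i 0 j - l).
  move=> j.
  have hc : forall P : int, exists k, forall i i', (k <= i)%N -> (k <= i')%N ->
      vge vh P (sq i 0 j - sq i' 0 j).
    move=> P; exists (k0 P) => i i' hi hi'.
    by have := sq_cauchy hi hi' j; rewrite !mxE.
  have [l hl] := hcomp hc.
  by exists l.
have [f hf] := fin_all_exists hl.
pose est : T := \row_j f j.
have lim_est : forall P i, (k0 P <= i)%N -> vecge P (sq i - est).
  move=> P i hi j; have [k hk] := hf j P.
  set i' := maxn k i.
  have -> : (sq i - est) 0 j = (sq i - sq i') 0 j + (sq i' 0 j - f j).
    by rewrite !mxE addrA subrK.
  apply: (vgeD hvh); first by apply: sq_cauchy => //; rewrite (leq_trans hi) // leq_maxr.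
  by apply: hk; rewrite leq_maxl.
have hest : Dn N est.
  have -> : est = sq (k0 (N + C0)) - (sq (k0 (N + C0)) - est) by rewrite opprB addrC subrK.
  apply: vecgeB; first by case: (sq_prop (k0 (N + C0))).
  exact: lim_est.
exists est; split => //.
have hfix : Tf est - est = 0.
  apply/rowP => j; rewrite [RHS]mxE; apply: vge_all => P.
  pose k := k0 P.
  have e : Tf est - est = (Tf est - Tf (sq k)) + (sq k.+1 - est).
    by rewrite /sq iterS addrA subrK.
  rewrite e mxE.
  apply: (vgeD hvh); last first.
    exact: (lim_est _ _ (leqW (leqnn _)) j).
  have h1 : Dn (P - C0) (est - sq k).
    rewrite /Dn subrK -opprB; apply: vecgeN; exact: lim_est.
  have h2 := Tf_contr hest (proj1 (sq_prop k)) h1.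
  apply: (vge_le (N := P - C0 + N + C0)); first lia.
  exact: (h2 j).
move: hfix; rewrite /Tf addrC addKr cnE => /eqP; rewrite scaler_eq0 invr_eq0 (negPf hn0) /=.
by rewrite subr_eq0 => /eqP.
Qed.

End RootEx.

End Root.

Section Approx.
Variables (F : fieldType) (Fh : fieldType) (iota : {rmorphism F -> Fh}) (vh : Fh -> int).
Hypothesis hvh : is_dvaluation vh.
Hypothesis hcomp : forall s : nat -> Fh,
        (forall N : int, exists k, forall i j, (k <= i)%N -> (k <= j)%N ->
            vge vh N (s i - s j)) ->
        exists l : Fh, forall N : int, exists k, forall i, (k <= i)%N ->
            vge vh N (s i - l).
Hypothesis hdense : forall (x : Fh) (N : int), exists y : F, vge vh N (iota y - x).
Variable n : nat.
Hypothesis hn0 : (n%:R : Fh) != 0.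
Hypothesis hn : vh n%:R = 0.

Lemma nrm_nz_close (a : Fh) :
  vge vh 1 (a - 1) -> a != 0.
Proof.
move=> h; apply/negP => /eqP a0; move: h; rewrite a0 sub0r /vge oppr_eq0 oner_eq0 /=.
by rewrite (wN hvh) (w1 hvh).
Qed.

Lemma approx_root (L : fieldExtType F) (xi : tens L iota) : nrm xi != 0 ->
  exists p : tens L (idfun : {rmorphism F -> F}) * tens L iota,
    [/\ nrm p.1 != 0, vge vh 1 (nrm (1 + p.2) - 1)
      & xi = tmap iota iota p.1 * (1 + p.2) ^+ n].
Proof.
move=> hx.
have [C0 [hC0 hC]] := vge_bound vh (fun t : 'I_(\dim {:L}) * 'I_(\dim {:L}) * 'I_(\dim {:L}) =>
   iota (mulcoef t.1.1 t.1.2 t.2)).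
have hC' : forall k i j, vge vh (- C0) (iota (mulcoef (L:=L) k i j)) by move=> k i j; apply: (hC (k, i, j)).
have [Kx [hKx hKx']] := vge_bound vh (fun j => xi 0 j).
pose xinv := tinv xi.
have hxinv : xi * xinv = 1 by apply: tinvK.
pose Pp := 1 + C0 + Kx + C0.
have hr : forall j : 'I_(\dim {:L}), exists y : F, vge vh Pp (iota y - xinv 0 j) by move=> j; apply: hdense.
have [f hf] := fin_all_exists hr.
pose r : tens L (idfun : {rmorphism F -> F}) := \row_j f j.
have hrm : vecge vh Pp (tmap iota iota r - xinv).
  by rewrite /vecge => j; move: (hf j); rewrite !mxE.
pose z := xi * tmap iota iota r.
have hz : Dn vh C0 1 (z - 1).
  have -> : z - 1 = xi * (tmap iota iota r - xinv) by rewrite /z mulrBr hxinv.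
  have := vecgeM hvh hC' hKx' hrm; apply: vecge_le; rewrite /Pp; lia.
have [e [he1 he2]] := root_ex hvh hC0 hC' hcomp hn0 hn (lexx _) hz.
have hcl := nrm_close hvh hC0 hC' ler01 he1.
have hnr : nrm r != 0.
  apply/negP => /eqP hr0.
  have : nrm z = 0 by rewrite /z nrmM -(nrm_map (phiA := idfun) (f := iota) (phiB := iota) (fun _ => erefl)) hr0 rmorph0 mulr0.
  rewrite -he2 nrmX => /eqP; rewrite expf_eq0 => /andP[_ /eqP h0].
  by move: (nrm_nz_close hcl); rewrite h0 eqxx.
pose u := tinv r.
have hur : r * u = 1 by apply: tinvK.
exists (u, e); split => //=.
  by apply/negP => /eqP hu0; move: (congr1 (fun a => nrm a) hur); rewrite nrmM hu0 mulr0 nrm1 => /eqP; rewrite eq_sym oner_eq0.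
by rewrite he2 /z mulrCA -(tmapM (phiA := idfun) (f := iota) (phiB := iota) (fun _ => erefl)) [u * r]mulrC hur (@tmap1 _ L _ _ idfun iota iota (fun _ => erefl)) mulr1.
Qed.

End Approx.

Unset Implicit Arguments. Set Strict Implicit. Set Printing Implicit Defensive.

Lemma vge_transfer (F Fh : fieldType) (v : F -> int) (iota : {rmorphism F -> Fh}) (vh : Fh -> int)
  (hvi : forall x : F, x != 0 -> vh (iota x) = v x) N (y : F) :
  vge vh N (iota y) -> vge v N y.
Proof.
rewrite /vge fmorph_eq0; have [->//|y0] := eqVneq y 0.
by rewrite /= hvi.
Qed.

Theorem mainTheorem19
  (F : fieldType) (v : F -> int)
  (hv : is_dvaluation v) (hH : henselian v)
  (Fh : fieldType) (iota : {rmorphism F -> Fh}) (vh : Fh -> int)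
  (hc : is_completion v iota vh)
  (m : nat) (L : 'I_m -> fieldExtType F)
  (hsep : forall i : 'I_m, separable 1%VS (fullv : {vspace L i}))
  (hchar : forall i : 'I_m, resid_char_ndiv v (\dim {:L i}))
  (hroot : forall i : 'I_m, exists z : F, ((\dim {:L i}) ^ 2)%N.-primitive_root z) :
  forall x : pts L Fh, inT iota x ->
    exists y : pts L F,
      inT id y /\ Requiv iota (fun i => map_mx iota (y i)) x.
Proof.
move=> x hx.
destruct hc as [hvh hvi hcomp hdense].
case: m L hsep hchar hroot x hx => [|m] L hsep hchar hroot x hx.
  exists (fun i => 0); split; first by rewrite /inT big_ord0.
  apply: rst_step; exists 1, (fun i => 0); split.
  - by rewrite hornerC oner_eq0.
  - by rewrite hornerC oner_eq0.
  - by rewrite !big_ord0 expr0.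
  - by case.
  - by case.
pose i0 : 'I_m.+1 := ord0.
pose n := \dim {:L i0}.
have [hn0F hnv] := hchar i0.
have hn0 : (n%:R : Fh) != 0 by rewrite -(rmorph_nat iota) fmorph_eq0.
have hn : vh n%:R = 0 by rewrite -(rmorph_nat iota) hvi.
have hnpos : (0 < n)%N by rewrite lt0n; apply/eqP => h; move: hn0; rewrite h eqxx.
have hxnz : forall i, nrm (x i : tens (L i) iota) != 0.
  move=> i; apply/negP => /eqP h0; move: hx; rewrite /inT (bigD1 i) //= normA_nrm h0 mul0r.
  by move/eqP; rewrite eq_sym oner_eq0.
have hch := fun i => approx_root hvh hcomp hdense hn0 hn (hxnz i).
have [pp hpp] := fin_all_exists hch.
pose u i := (pp i).1.
pose e i := (pp i).2.
have hxe : forall i, x i = tmap iota iota (u i) * (1 + e i) ^+ n.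
  by move=> i; have [_ _ ->] := hpp i.
have hnu : forall i, nrm (u i) != 0 by move=> i; have [-> _ _] := hpp i.
have hcl : forall i, vge vh 1 (nrm (1 + e i) - 1) by move=> i; have [_ -> _] := hpp i.
pose S := \prod_i nrm (1 + e i).
pose c := \prod_i nrm (u i).
have hkey : iota c * S ^+ n = 1.
  rewrite -hx /inT rmorph_prod -prodrXl -big_split /=; apply: eq_bigr => i _.
  rewrite normA_nrm hxe nrmM nrmX.
  by rewrite -(nrm_map (phiA := idfun) (f := iota) (phiB := iota) (fun _ => erefl)).
have hint : forall a : Fh, vge vh 1 (a - 1) -> vge vh 0 a.
  move=> a ha; rewrite -(subrK 1 a); apply: (vgeD hvh); last exact: (vge1 hvh).
  exact: vge_le ha.
have hS1 : vge vh 1 (S - 1).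
  have := @vge_prodB _ _ hvh 1 _ (index_enum 'I_m.+1) (fun i => nrm (1 + e i)) (fun _ => 1).
  rewrite big1_eq; apply => // i; [exact: hint | exact: (vge1 hvh)].
have hSn1 : vge vh 1 (S ^+ n - 1).
  have := @vge_prodB _ _ hvh 1 _ (index_enum 'I_n) (fun i => S) (fun _ => 1).
  rewrite big1_eq -[\prod_(i <- index_enum 'I_n) S]/(\prod_(i < n) S) prodr_const card_ord.
  by apply => // i; [exact: hint | exact: (vge1 hvh)].
have hc0 : c != 0.
  by apply/negP => /eqP h0; move: hkey; rewrite h0 rmorph0 mul0r => /eqP; rewrite eq_sym oner_eq0.
pose cinv := c^-1.
have hcinv : iota cinv = S ^+ n.
  have hic : iota c != 0 by rewrite fmorph_eq0.
  by rewrite fmorphV; apply: (mulfI hic); rewrite mulfV.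
have hcv : vge v 1 (cinv - 1).
  by apply: (@vge_transfer _ _ _ _ _ hvi); rewrite rmorphB rmorph1 hcinv.
have hcvi : vge v 0 cinv.
  rewrite -(subrK 1 cinv); apply: (vgeD hv); last exact: (vge1 hv).
  exact: vge_le hcv.
pose p := 'X^n - cinv%:P.
have [b [hb _]] : exists b, root p b /\ vmax v (b - 1).
  apply: hH.
  - exact: monicXnsubC.
  - move=> i; rewrite coefB coefXn coefC; change (vge v 0 ((i == n)%:R - (if i == 0%N then cinv else 0))).
    apply: (vgeB hv); first by case: (i == n); [exact: (vge1 hv) | exact: vge0].
    by case: (i == 0%N); [exact: hcvi | exact: vge0].
  - exact: (vge1 hv).
  - rewrite /p !hornerE expr1n.
    have : vge v 1 (1 - cinv) by rewrite -opprB; apply: (vgeN hv).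
    rewrite /vge /vmax; case: (_ == 0) => //= h; lia.
  - rewrite /p derivB derivXn derivC subr0 hornerMn hornerXn expr1n.
    by rewrite /vmax (negPf hn0F) hnv ltxx.
have hbn' : b ^+ n = cinv.
  by move: hb; rewrite rootE /p !hornerE subr_eq0 => /eqP.
have [z0 hz0] := hroot i0.
have hzeta : n.-primitive_root (z0 ^+ n).
  have hd : (n %| n ^ 2)%N by rewrite -mulnn dvdn_mulr.
  have := dvdn_prim_root hz0 hd.
  by rewrite -mulnn mulnK.
have hzi : n.-primitive_root (iota (z0 ^+ n)) by rewrite fmorph_primitive_root.
have hSn0 : S ^+ n != 0.
  by apply/negP => /eqP h0; move: hkey; rewrite h0 mulr0 => /eqP; rewrite eq_sym oner_eq0.
have hbn : iota b ^+ n = S ^+ n by rewrite -rmorphXn hbn' hcinv.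
have hib : iota b != 0.
  by apply/negP => /eqP h0; move: hbn; rewrite h0 expr0n gtn_eqF //= => h; move: hSn0; rewrite -h eqxx.
have hunit : (S / iota b) ^+ n = 1 by rewrite expr_div_n hbn divff.
have [kk hk] := prim_rootP hzi hunit.
pose s0 := b * (z0 ^+ n) ^+ kk.
have hs0 : iota s0 = S by rewrite rmorphM rmorphXn -hk mulrC divfK.
pose sc (i : 'I_m.+1) : F := if i == i0 then s0 else 1.
pose y : pts L F := fun i => sc i *: (u i : tens (L i) idfun).
have hsc : \prod_i (sc i) ^+ (\dim {:L i}) = s0 ^+ n.
  rewrite (bigD1 i0) //= /sc eqxx big1 ?mulr1 // => i /negPf ->; exact: expr1n.
exists y; split.
  rewrite /inT.
  transitivity (\prod_i nrm (y i : tens (L i) idfun)).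
    by apply: eq_bigr => i _; rewrite -normA_nrm; apply: normA_ext.
  apply: (fmorph_inj iota); rewrite rmorph1 -hkey rmorph_prod.
  under eq_bigr do rewrite nrmZ rmorphM.
  by rewrite big_split /= -rmorph_prod hsc rmorphXn hs0 mulrC rmorph_prod.
apply: rst_step.
pose phiP : {rmorphism F -> {poly Fh}} := polyC \o iota.
pose lift i (a : tens (L i) iota) : tens (L i) phiP := tmap phiP polyC a.
pose ell i : tens (L i) phiP := 1 + 'X *: lift i (e i).
pose sig := \prod_i nrm (ell i).
pose U i : tens (L i) phiP := tmap phiP phiP (u i).
pose scP (i : 'I_m.+1) : {poly Fh} := if i == i0 then S%:P else sig.
pose Pv : pts L {poly Fh} := fun i => scP i *: (U i * ell i ^+ n).
have hev : forall t a, horner_eval t (phiP a) = iota a.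
  by move=> t a; rewrite /= horner_evalE hornerC.
pose E t i (a : tens (L i) phiP) : tens (L i) iota := tmap iota (horner_eval t) a.
have Ecoord : forall t i (a : tens (L i) phiP) k, (a 0 k).[t] = E t i a 0 k.
  by move=> t i a k; rewrite mxE.
have Elift : forall t i a, E t i (lift i a) = a.
  by move=> t i a; apply/rowP => k; rewrite !mxE /= horner_evalE hornerC.
have EU : forall t i, E t i (U i) = tmap iota iota (u i).
  by move=> t i; apply/rowP => k; rewrite !mxE /= horner_evalE hornerC.
have Eell : forall t i, E t i (ell i) = 1 + t *: e i.
  move=> t i; rewrite /E /ell (tmapD iota (horner_eval t)) (tmap1 (L i) (hev t)) (tmapZ iota (horner_eval t)).
  by rewrite -/(E t i _) Elift /= horner_evalE hornerX.
have Esig : forall t, sig.[t] = \prod_i nrm (1 + t *: e i).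
  move=> t; rewrite -horner_evalE /sig rmorph_prod; apply: eq_bigr => i _.
  by rewrite (nrm_map (hev t)) -/(E t i _) Eell.
have EP : forall t i, E t i (Pv i) = (scP i).[t] *: (tmap iota iota (u i) * (1 + t *: e i) ^+ n).
  move=> t i; rewrite /E /Pv (tmapZ iota (horner_eval t)) (tmapM (hev t)) (tmapX (hev t)).
  by rewrite -!/(E t i _) EU Eell /= horner_evalE.
have hsig0 : sig.[0] = 1.
  by rewrite Esig big1 // => i _; rewrite scale0r addr0 nrm1.
have hsig1 : sig.[1] = S.
  by rewrite Esig; apply: eq_bigr => i _; rewrite scale1r.
have hS0 : S != 0 by apply/negP => /eqP h0; move: hSn0; rewrite h0 expr0n gtn_eqF // eqxx.
exists sig, Pv; split.
- by rewrite hsig0 oner_eq0.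
- by rewrite hsig1.
- transitivity (\prod_i nrm (Pv i : tens (L i) phiP)).
    by apply: eq_bigr => i _; rewrite -normA_nrm; apply: normA_ext.
  under eq_bigr do rewrite nrmZ nrmM nrmX -(nrm_map (phiA := idfun) (f := phiP) (phiB := phiP) (fun _ => erefl)).
  rewrite big_split big_split /= -rmorph_prod -/c prodrXl -/sig.
  rewrite (bigD1 i0) //= /scP eqxx.
  under eq_bigr => i /negPf hi do rewrite hi.
  rewrite prodrXr [in RHS](bigD1 i0) //= exprD -/n.
  have hc1 : S%:P ^+ n * phiP c = 1.
    by rewrite /= -rmorphXn -rmorphM mulrC hkey rmorph1.
  set Q := sig ^+ _.
  have hpc : (\prod_(i < m.+1) iota (nrm (u i)))%:P = phiP c.
    by rewrite /c !rmorph_prod.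
  rewrite hpc.
  transitivity ((S%:P ^+ n * phiP c) * (sig ^+ n * Q)); first by ring.
  by rewrite hc1 mul1r.
- move=> i k; rewrite Ecoord EP hsig0 divr1 scale0r addr0 expr1n mulr1.
  have -> : (scP i).[0] = iota (sc i).
    by rewrite /scP /sc; case: (i == i0); rewrite ?hornerC ?hsig0 ?hs0 ?rmorph1.
  by rewrite /y -(tmapZ (phiA := idfun) iota iota).
- move=> i k; rewrite Ecoord EP hsig1 scale1r -hxe.
  have -> : (scP i).[1] = S by rewrite /scP; case: (i == i0); rewrite ?hornerC ?hsig1.
  by rewrite mxE mulrAC divff // mul1r.
Qed.
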